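(* Let $m,n\ge1$ and let $A\in\{0,1\}^{m\times n}$ have exactly three ones in each row. Each of the following four subsets of $\mathrm{NPadj}(A)$ is the vertex set of a face of $\operatorname{conv}(\mathrm{NPadj}(A))$, and its convex hull is affinely equivalent to $\operatorname{conv}(\mathrm{Part}(A))$: - $F_1=\{x\in\mathrm{NPadj}(A): y_1=0,y_2=1,y_3=1\}$; - $F_2=\{x\in\mathrm{NPadj}(A): y_1=1,y_2=0,y_3=1\}$; - $F_3=\{x\in\mathrm{NPadj}(A): y_1=0,y_2=1,y_3=0\}$; - $F_4=\{x\in\mathrm{NPadj}(A): y_1=1,y_2=0,y_3=0\}$. In particular, $\mathrm{Part}(A)\le_a\mathrm{NPadj}(A)$.
   Context: **Definition of $\mathrm{NPadj}(A)$.** Let $m,n\ge1$ and let $A\in\{0,1\}^{m\times n}$ have exactly three ones in each row. Index the coordinates of $\mathbb{R}^{3n+3}$ by $y_1,y_2,y_3$ and by $x_j,\bar x_j,x'_j$ for $j\in[n]=\{1,\dots,n\}$. Then $\mathrm{NPadj}(A)$ is the set of vectors in $\{0,1\}^{3n+3}$ satisfying: - $x_j+\bar x_j=1$ for all $j\in[n]$; - $y_1+y_2+x'_j+\bar x_j=2$ for all $j\in[n]$; - for each row of $A$, with ones in columns $i<j<k$, the equation $y_3+x_i+x'_j+x'_k=2$. **Partition polytope.** $\mathrm{Part}(A)=\{z\in\{0,1\}^n: Az=\mathbf 1\}$. **Affine reduction of polytopes.** For finite sets $P,Q$ of 0/1 vectors, $P\le_a Q$ means: there is an affine map $\alpha$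 on $\operatorname{conv}(P)$, injective there, such that $\alpha(\operatorname{conv}(P))$ is a face (possibly improper) of $\operatorname{conv}(Q)$. *)

(* Defs.v *)
From HB Require Import structures.
From mathcomp Require Import all_boot all_order all_algebra.
Set Implicit Arguments. Unset Strict Implicit. Unset Printing Implicit Defensive.
Import Order.TTheory GRing.Theory Num.Theory.

Section Poly.
Variable R : realFieldType.
Local Open Scope ring_scope.

Definition emb (T : finType) (v : {ffun T -> bool}) : {ffun T -> R} :=
  [ffun t => (v t)%:R].

Definition conv (T : finType) (P : {set {ffun T -> bool}}) (x : {ffun T -> R}) : Prop :=
  exists lam : {ffun {ffun T -> bool} -> R},
    (forall v, 0 <= lam v) /\ (forall v, v \notin P -> lam v = 0) /\
    \sum_v lam v = 1 /\ (forall t, x t = \sum_v lam v * emb v t).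

Definition dotp (T : finType) (c x : {ffun T -> R}) : R := \sum_t c t * x t.

(* G is a face (possibly improper, possibly empty) of C:
   G = C ∩ {c.x = d} for a valid inequality c.x <= d of C. *)
Definition is_face (T : finType) (C G : {ffun T -> R} -> Prop) : Prop :=
  exists (c : {ffun T -> R}) (d : R),
    (forall x, C x -> dotp c x <= d) /\
    (forall x, G x <-> (C x /\ dotp c x = d)).

Definition affmap (T T' : finType) (M : T' -> T -> R) (b : T' -> R)
  (x : {ffun T -> R}) : {ffun T' -> R} :=
  [ffun t' => b t' + \sum_t M t' t * x t].

Definition inj_on (T T' : finType) (f : {ffun T -> R} -> {ffun T' -> R})
  (C : {ffun T -> R} -> Prop) : Prop :=
  forall x y, C x -> C y -> f x = f y -> x = y.

Definition image_of (T T' : finType) (f : {ffun T -> R} -> {ffun T' -> R})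
  (C : {ffun T -> R} -> Prop) (z : {ffun T' -> R}) : Prop :=
  exists2 x, C x & z = f x.

Definition aff_equiv (T T' : finType) (C : {ffun T -> R} -> Prop)
  (D : {ffun T' -> R} -> Prop) : Prop :=
  exists (M : T' -> T -> R) (b : T' -> R),
    inj_on (affmap M b) C /\ (forall z, D z <-> image_of (affmap M b) C z).

Definition le_a (T T' : finType) (P : {set {ffun T -> bool}})
  (Q : {set {ffun T' -> bool}}) : Prop :=
  exists (M : T' -> T -> R) (b : T' -> R),
    inj_on (affmap M b) (conv P) /\
    is_face (conv Q) (image_of (affmap M b) (conv P)).
End Poly.

(* Coordinates of R^{3n+3}: y_1,y_2,y_3 (inl k, k : 'I_3), and for j : 'I_n
   x_j, xbar_j, x'_j. *)
Definition coord (n : nat) : finType := ('I_3 + ('I_n + ('I_n + 'I_n)))%type.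
Definition cy {n} (k : 'I_3) : coord n := inl k.
Definition cx {n} (j : 'I_n) : coord n := inr (inl j).
Definition cxb {n} (j : 'I_n) : coord n := inr (inr (inl j)).
Definition cxp {n} (j : 'I_n) : coord n := inr (inr (inr j)).
Definition y1 {n} : coord n := cy (@Ordinal 3 0 isT).
Definition y2 {n} : coord n := cy (@Ordinal 3 1 isT).
Definition y3 {n} : coord n := cy (@Ordinal 3 2 isT).

Definition NPadj (m n : nat) (A : 'M[bool]_(m, n)) : {set {ffun coord n -> bool}} :=
  [set v : {ffun coord n -> bool} |
    [&& [forall j : 'I_n, v (cx j) + v (cxb j) == 1]%N,
        [forall j : 'I_n, v y1 + v y2 + v (cxp j) + v (cxb j) == 2]%N &
        [forall r : 'I_m, forall i : 'I_n, forall j : 'I_n, forall k : 'I_n,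
           [&& (i < j)%N, (j < k)%N, A r i, A r j & A r k] ==>
           (v y3 + v (cx i) + v (cxp j) + v (cxp k) == 2)%N]]].

Definition Part (m n : nat) (A : 'M[bool]_(m, n)) : {set {ffun 'I_n -> bool}} :=
  [set z : {ffun 'I_n -> bool} |
    [forall r : 'I_m, \sum_(j < n) (A r j : nat) * (z j : nat) == 1]%N].

Definition Fsub (m n : nat) (A : 'M[bool]_(m, n)) (a b c : bool) :
  {set {ffun coord n -> bool}} :=
  [set v in NPadj A | [&& v y1 == a, v y2 == b & v y3 == c]].

Arguments conv R {T} P x.
Arguments le_a R {T T'} P Q.

(* Main.v *)
Require Import Defs.
From HB Require Import structures.
From mathcomp Require Import all_boot all_order all_algebra zify lra.
Set Implicit Arguments. Unset Strict Implicit. Unset Printing Implicit Defensive.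
Import Order.TTheory GRing.Theory Num.Theory.

Section Gen.
Variable R : realFieldType.
Local Open Scope ring_scope.

Definition wit (T : finType) (P : {set {ffun T -> bool}}) (x : {ffun T -> R})
  (lam : {ffun {ffun T -> bool} -> R}) :=
  (forall v, 0 <= lam v) /\ (forall v, v \notin P -> lam v = 0) /\
    \sum_v lam v = 1 /\ (forall t, x t = \sum_v lam v * emb R v t).

Lemma affine_conv (T T' : finType) (M : T' -> T -> R) b (x : {ffun T -> R})
  (lam : {ffun {ffun T -> bool} -> R}) :
  \sum_v lam v = 1 -> (forall t, x t = \sum_v lam v * emb R v t) ->
  forall t', affmap M b x t' = \sum_v lam v * affmap M b (emb R v) t'.
Proof.
move=> s1 xE t'; rewrite /affmap ffunE.
have -> : \sum_v lam v * [ffun t'0 => b t'0 + \sum_t M t'0 t * emb R v t] t' =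
  \sum_v (lam v * b t' + lam v * \sum_t M t' t * emb R v t).
  by apply: eq_bigr => v _; rewrite ffunE mulrDr.
rewrite big_split /= -big_distrl /= s1 mul1r; congr (_ + _).
under [RHS]eq_bigr => v _ do rewrite big_distrr /=.
rewrite exchange_big /=; apply: eq_bigr => t _.
rewrite xE big_distrr /=; apply: eq_bigr => v _.
by rewrite mulrCA.
Qed.

Definition push (T T' : finType) (g : {ffun T -> bool} -> {ffun T' -> bool})
  (lam : {ffun {ffun T -> bool} -> R}) : {ffun {ffun T' -> bool} -> R} :=
  [ffun w => \sum_(v | g v == w) lam v].

Lemma push_wit (T T' : finType) (P : {set {ffun T -> bool}})
  (Q : {set {ffun T' -> bool}}) g (M : T' -> T -> R) b x lam :
  (forall v, v \in P -> g v \in Q) ->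
  (forall v, v \in P -> affmap M b (emb R v) = emb R (g v)) ->
  wit P x lam -> wit Q (affmap M b x) (push g lam).
Proof.
move=> gQ gE [l0 [lP [l1 lx]]].
have sumE : forall F : {ffun T' -> bool} -> R,
  \sum_w push g lam w * F w = \sum_v lam v * F (g v).
  move=> F; rewrite (partition_big g xpredT) //=.
  apply: eq_bigr => w _; rewrite ffunE big_distrl /=.
  by apply: eq_bigr => v /eqP ->.
split; [|split; [|split]].
- by move=> w; rewrite ffunE; apply: sumr_ge0.
- move=> w wQ; rewrite ffunE big1 // => v /eqP gw.
  by apply: lP; apply: contra wQ => vP; rewrite -gw gQ.
- have := sumE (fun _ => 1); under eq_bigr do rewrite mulr1.
  by move=> ->; under eq_bigr do rewrite mulr1.
- move=> t'; rewrite (affine_conv M b l1 lx) (sumE (fun w => emb R w t')).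
  apply: eq_bigr => v _; case: (boolP (v \in P)) => vP.
    by rewrite gE.
  by rewrite lP ?mul0r.
Qed.

Lemma push_push (T T' : finType) (Q : {set {ffun T' -> bool}})
  (g : {ffun T -> bool} -> {ffun T' -> bool}) (g' : {ffun T' -> bool} -> {ffun T -> bool})
  (mu : {ffun {ffun T' -> bool} -> R}) :
  (forall u, u \in Q -> g (g' u) = u) -> (forall u, u \notin Q -> mu u = 0) ->
  push g (push g' mu) = mu.
Proof.
move=> gg mQ; apply/ffunP => w; rewrite ffunE.
under eq_bigr do rewrite ffunE.
have -> : \sum_(v | g v == w) \sum_(u | g' u == v) mu u = \sum_(u | g (g' u) == w) mu u.
  rewrite [RHS](partition_big g' (fun v => g v == w)) //=.
  apply: eq_bigr => v gv; apply: eq_bigl => u.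
  by case E: (g' u == v); rewrite ?andbF // (eqP E) gv.
rewrite big_mkcond /= (bigD1 w) //= big1 /=.
  case: (boolP (w \in Q)) => wQ; first by rewrite gg // eqxx addr0.
  by rewrite mQ // if_same addr0.
move=> u uw; case: (boolP (u \in Q)) => uQ; first by rewrite gg // (negbTE uw).
by rewrite mQ // if_same.
Qed.

Lemma dot_conv (T : finType) (c x : {ffun T -> R}) (lam : {ffun {ffun T -> bool} -> R}) :
  (forall t, x t = \sum_v lam v * emb R v t) ->
  dotp c x = \sum_v lam v * dotp c (emb R v).
Proof.
move=> xE; rewrite /dotp.
under [RHS]eq_bigr => v _ do rewrite big_distrr /=.
rewrite exchange_big /=; apply: eq_bigr => t _.
rewrite xE big_distrr /=; apply: eq_bigr => v _.
by rewrite mulrCA.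
Qed.

End Gen.

Lemma triple n (S : {set 'I_n}) : #|S| = 3 ->
  exists i j k : 'I_n, [/\ (i < j)%N, (j < k)%N &
     forall l, (l \in S) = [|| l == i, l == j | l == k]].
Proof.
move=> cS.
have srt : sorted (fun i j : 'I_n => (i < j)%N) (enum S).
  rewrite -deprecated_filter_index_enum.
  apply: sorted_filter; first by move=> ???; apply: ltn_trans.
  rewrite /index_enum -enumT.
  by have := iota_ltn_sorted 0 n; rewrite -val_enum_ord sorted_map.
move: cS; rewrite cardE.
case E: (enum S) srt => [|i [|j [|k [|? ?]]]] //= /and3P[ij jk _] _.
exists i, j, k; split => // l.
by rewrite -mem_enum E !inE.
Qed.

Lemma ord_neq n (i j : 'I_n) : (i < j)%N -> i != j.
Proof. by move=> h; apply/eqP => E; rewrite E ltnn in h. Qed.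

Section Conc.
Variables (m n : nat) (A : 'M[bool]_(m, n)).

Lemma rowsum r i j k (F : 'I_n -> nat) :
  (forall l, A r l = [|| l == i, l == j | l == k]) -> (i < j)%N -> (j < k)%N ->
  (\sum_l (A r l : nat) * F l = F i + F j + F k)%N.
Proof.
move=> Al ij jk.
have ik := ltn_trans ij jk.
rewrite (bigD1 i) //= (bigD1 j) /=; last by rewrite eq_sym ord_neq.
rewrite (bigD1 k) /=; last by rewrite eq_sym ord_neq // eq_sym ord_neq.
rewrite big1 ?addn0; last first.
  by move=> l /andP[/andP[li lj] lk]; rewrite Al (negbTE li) (negbTE lj) (negbTE lk).
by rewrite !Al !eqxx ?orbT /= !mul1n addnA.
Qed.

Lemma tri_uniq r (i0 j0 k0 i j k : 'I_n) :
  (forall l, A r l = [|| l == i0, l == j0 | l == k0]) -> (i0 < j0)%N -> (j0 < k0)%N ->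
  (i < j)%N -> (j < k)%N -> A r i -> A r j -> A r k -> [/\ i = i0, j = j0 & k = k0].
Proof.
move=> Al h1 h2 h3 h4; rewrite !Al.
case/or3P => /eqP ?; case/or3P => /eqP ?; case/or3P => /eqP ?; subst => //; exfalso; lia.
Qed.

End Conc.

Section Face.
Variable R : realFieldType.
Local Open Scope ring_scope.
Variables (m n : nat) (A : 'M[bool]_(m, n)) (a b c : bool).

Definition sgb (p : bool) : R := if p then 1 else -1.
Definition yv (k : 'I_3) : bool :=
  if val k == 0%N then a else if val k == 1%N then b else c.
Definition cvec : {ffun Defs.coord n -> R} :=
  [ffun t => match t with inl k => sgb (yv k) | inr _ => 0 end].
Definition dd : R := (a : nat)%:R + (b : nat)%:R + (c : nat)%:R.

Lemma sum3 (F : 'I_3 -> R) :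
  \sum_k F k = F (Ordinal (isT : (0 < 3)%N)) + F (Ordinal (isT : (1 < 3)%N))
    + F (Ordinal (isT : (2 < 3)%N)).
Proof.
rewrite !big_ord_recl big_ord0 addr0 addrA.
by congr (F _ + F _ + F _); apply: val_inj.
Qed.

Definition et (p q : bool) : R := (p : nat)%:R - sgb p * (q : nat)%:R.
Lemma et_ge0 p q : 0 <= et p q.
Proof. by case: p; case: q; rewrite /et /sgb /=; lra. Qed.
Lemma et_eq0 p q : (et p q == 0) = (q == p).
Proof. by case: p; case: q; rewrite /et /sgb /= ?(mulr1,mulr0,subr0,subrr,sub0r,opprK,oppr0,eqxx,oner_eq0). Qed.

Lemma dotE (v : {ffun Defs.coord n -> bool}) :
  dd - dotp cvec (emb R v) = et a (v y1) + et b (v y2) + et c (v y3).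
Proof.
rewrite /dotp big_sumType /= [X in _ - (_ + X)]big1 ?addr0; last by move=> t _; rewrite ffunE /= mul0r.
rewrite sum3 !ffunE /dd /et /yv /=.
rewrite /y1 /y2 /y3 /cy; lra.
Qed.


Definition EE (v : {ffun Defs.coord n -> bool}) := et a (v y1) + et b (v y2) + et c (v y3).

Lemma EE_ge0 v : 0 <= EE v.
Proof. by apply: addr_ge0; [apply: addr_ge0|]; apply: et_ge0. Qed.

Lemma EE_eq0 v : (EE v == 0) = [&& v y1 == a, v y2 == b & v y3 == c].
Proof.
rewrite /EE paddr_eq0; [|by apply: addr_ge0; apply: et_ge0|by apply: et_ge0].
by rewrite paddr_eq0 ?et_ge0 // !et_eq0 andbA.
Qed.

Lemma keyE v : dotp cvec (emb R v) = dd - EE v.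
Proof. by rewrite /EE -dotE opprB addrC subrK. Qed.

Lemma face : is_face (conv R (NPadj A)) (conv R (Fsub A a b c)).
Proof.
exists cvec, dd; split.
  move=> x [lam [l0 [lP [l1 lx]]]]; rewrite (dot_conv cvec lx).
  rewrite -[leRHS]mul1r -l1 big_distrl /=; apply: ler_sum => v _.
  by apply: ler_wpM2l => //; rewrite keyE lerBlDr lerDl EE_ge0.
move=> x; split.
  case=> lam [l0 [lP [l1 lx]]]; split.
    exists lam; split; [exact: l0|split; [|by split]] => v vN.
    by apply: lP; rewrite inE (negbTE vN).
  rewrite (dot_conv cvec lx) -[RHS]mul1r -l1 big_distrl /=.
  apply: eq_bigr => v _; case: (boolP (v \in Fsub A a b c)) => vF.
    move: vF; rewrite inE => /andP[_ H].
    by rewrite keyE; move: H; rewrite -EE_eq0 => /eqP ->; rewrite subr0.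
  by rewrite lP ?mul0r.
case=> -[lam [l0 [lP [l1 lx]]]] dx.
exists lam; split; [exact: l0|split; [|by split]] => v vF.
have h : \sum_v lam v * EE v = dd - dotp cvec x.
  rewrite (dot_conv cvec lx).
  rewrite -[dd]mul1r -l1 big_distrl -sumrB /=; apply: eq_bigr => u _.
  by rewrite keyE; lra.
rewrite dx subrr in h.
have := psumr_eq0P (fun u _ => mulr_ge0 (l0 u) (EE_ge0 u)) h (i := v) isT.
move/eqP; rewrite mulf_eq0 => /orP[/eqP //|E0].
apply: lP; apply: contra vF => vN; rewrite inE vN /= -EE_eq0 //.
Qed.

End Face.

Section Maps.
Variable R : realFieldType.
Local Open Scope ring_scope.
Variables (m n : nat) (A : 'M[bool]_(m, n)) (a b c : bool).

Definition Mf (t' : Defs.coord n) (j : 'I_n) : R :=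
  match t' with
  | inl _ => 0
  | inr (inl i) => sgb R c * (j == i)%:R
  | inr (inr (inl i)) => - (sgb R c * (j == i)%:R)
  | inr (inr (inr i)) => sgb R c * (j == i)%:R
  end.
Definition bf (t' : Defs.coord n) : R :=
  match t' with
  | inl k => (yv a b c k : nat)%:R
  | inr (inl _) => (~~ c : nat)%:R
  | inr (inr (inl _)) => (c : nat)%:R
  | inr (inr (inr _)) => (~~ c : nat)%:R
  end.
Definition gf (z : {ffun 'I_n -> bool}) : {ffun Defs.coord n -> bool} :=
  [ffun t => match t with
   | inl k => yv a b c k
   | inr (inl j) => z j == c
   | inr (inr (inl j)) => z j != c
   | inr (inr (inr j)) => z j == c end].
Definition Mh (j : 'I_n) (t : Defs.coord n) : R := sgb R c * (t == cx j)%:R.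
Definition bh (j : 'I_n) : R := (~~ c : nat)%:R.
Definition gh (w : {ffun Defs.coord n -> bool}) : {ffun 'I_n -> bool} :=
  [ffun j => w (cx j) == c].

Lemma pick (T : finType) (k : R) (i : T) (F : T -> R) :
  \sum_t (k * (t == i)%:R) * F t = k * F i.
Proof.
rewrite (bigD1 i) //= eqxx mulr1 big1 ?addr0 // => t /negbTE ->.
by rewrite mulr0 mul0r.
Qed.

Lemma ar1 (q : bool) : (~~ c : nat)%:R + sgb R c * (q : nat)%:R = ((q == c) : nat)%:R :> R.
Proof. by case: c; case: q; rewrite /sgb /=; lra. Qed.
Lemma ar2 (q : bool) : (c : nat)%:R + - (sgb R c * (q : nat)%:R) = ((q != c) : nat)%:R :> R.
Proof. by case: c; case: q; rewrite /sgb /=; lra. Qed.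

Lemma E1 z : affmap Mf bf (emb R z) = emb R (gf z).
Proof.
apply/ffunP => t; rewrite !ffunE.
case: t => [k|[i|[i|i]]] /=.
- by rewrite big1 ?addr0 // => j _; rewrite mul0r.
- under eq_bigr do rewrite ffunE. by rewrite pick ar1.
- under eq_bigr do rewrite ffunE mulNr. by rewrite sumrN pick ar2.
- under eq_bigr do rewrite ffunE. by rewrite pick ar1.
Qed.

Lemma E2 w : affmap Mh bh (emb R w) = emb R (gh w).
Proof.
apply/ffunP => j; rewrite !ffunE /Mh /bh.
under eq_bigr do rewrite ffunE.
by rewrite pick ar1.
Qed.

Lemma injf : inj_on (affmap Mf bf) (fun _ => True).
Proof.
move=> x y _ _ E; apply/ffunP => j.
have := congr1 (fun f : {ffun Defs.coord n -> R} => f (cx j)) E.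
rewrite !ffunE /= !pick => /addrI /mulfI; apply.
by rewrite /sgb; case: c; rewrite ?oppr_eq0 oner_eq0.
Qed.


Hypothesis ab : a != b.
Hypothesis H3 : forall r : 'I_m, #|[set j : 'I_n | A r j]| = 3%N.

Lemma rowtri r : exists i j k : 'I_n, [/\ (i < j)%N, (j < k)%N &
     forall l, A r l = [|| l == i, l == j | l == k]].
Proof.
have [i [j [k [ij jk Al]]]] := triple (H3 r).
by exists i, j, k; split => // l; rewrite -Al inE.
Qed.

Lemma M1 z : z \in Part A -> gf z \in Fsub A a b c.
Proof.
move=> zP; rewrite /Fsub inE !ffunE /= !eqxx andbT.
rewrite andbT inE; apply/and3P; split.
- by apply/forallP => j; rewrite !ffunE /=; case: (z j == c).
- apply/forallP => j; rewrite !ffunE /=.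
  by move: ab; case: a; case: b; case: (z j == c).
apply/forallP => r; apply/forallP => i; apply/forallP => j; apply/forallP => k.
apply/implyP => /and5P[ij jk Ai Aj Ak].
have [i0 [j0 [k0 [ij0 jk0 Al]]]] := rowtri r.
have [-> -> ->] := tri_uniq Al ij0 jk0 ij jk Ai Aj Ak.
move: zP; rewrite inE => /forallP /(_ r) /eqP.
rewrite (rowsum _ Al ij0 jk0) !ffunE /=.
by case: c; case: (z i0); case: (z j0); case: (z k0).
Qed.

Lemma M2 w : w \in Fsub A a b c -> gh w \in Part A /\ gf (gh w) = w.
Proof.
rewrite inE => /andP[wN /and3P[/eqP w1 /eqP w2 /eqP w3]].
move: wN; rewrite inE => /and3P[/forallP h1 /forallP h2 /forallP h3].
have fb j : w (cxb j) = ~~ w (cx j).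
  by move: (h1 j); case: (w (cx j)); case: (w (cxb j)).
have fp j : w (cxp j) = w (cx j).
  move: (h1 j) (h2 j); rewrite w1 w2; move: ab.
  by case: a; case: b; case: (w (cx j)); case: (w (cxb j)); case: (w (cxp j)).
split.
  rewrite inE; apply/forallP => r.
  have [i0 [j0 [k0 [ij0 jk0 Al]]]] := rowtri r.
  rewrite (rowsum _ Al ij0 jk0) !ffunE.
  move: (h3 r) => /forallP/(_ i0)/forallP/(_ j0)/forallP/(_ k0).
  rewrite ij0 jk0 !Al !eqxx ?orbT /= w3 !fp.
  by case: c; case: (w (cx i0)); case: (w (cx j0)); case: (w (cx k0)).
apply/ffunP => t; rewrite !ffunE.
case: t => [k|[j|[j|j]]] /=; rewrite ?ffunE.
- case: k => [[|[|[|kk]]] Hk] //=.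
  + by rewrite -w1; congr (w (inl _)); apply: val_inj.
  + by rewrite -w2; congr (w (inl _)); apply: val_inj.
  + by rewrite -w3; congr (w (inl _)); apply: val_inj.
- by rewrite /cx; case: c; case: (w (inr (inl j))).
- have := fb j; rewrite /cxb /cx => ->.
  by case: c; case: (w (inr (inl j))).
- have := fp j; rewrite /cxp /cx => ->.
  by case: c; case: (w (inr (inl j))).
Qed.

Lemma equivF : aff_equiv (conv R (Part A)) (conv R (Fsub A a b c)).
Proof.
exists Mf, bf; split; first by move=> x y _ _; apply: injf.
move=> z; split.
  case=> mu muw.
  have wx : wit (Part A) (affmap Mh bh z) (push gh mu).
    apply: (push_wit (P := Fsub A a b c) (Q := Part A) (g := gh) (M := Mh) (b := bh)) => //.
    - by move=> w /M2 [].
    - by move=> w _; apply: E2.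
  exists (affmap Mh bh z); first by exists (push gh mu).
  have := push_wit (Q := Fsub A a b c) (g := gf) M1 (fun v _ => E1 v) wx.
  rewrite (push_push (Q := Fsub A a b c)); last 2 first.
  - by move=> u /M2 [].
  - by case: muw => _ [].
  case=> _ [_ [_ fx]]; apply/ffunP => t; rewrite fx.
  by case: muw => _ [_ [_ ->]].
case=> x [lam lw] ->.
exists (push gf lam).
exact: (push_wit (P := Part A) (Q := Fsub A a b c) (g := gf) (M := Mf) (b := bf) M1 (fun v _ => E1 v) lw).
Qed.

End Maps.

Theorem mainTheorem3 (R : realFieldType) (m n : nat) (A : 'M[bool]_(m, n)) :
  (0 < m)%N -> (0 < n)%N ->
  (forall r : 'I_m, #|[set j : 'I_n | A r j]| = 3%N) ->
  (forall abc : bool * bool * bool,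
     abc \in [:: (false, true, true); (true, false, true);
                 (false, true, false); (true, false, false)] ->
     let F := Fsub A abc.1.1 abc.1.2 abc.2 in
     is_face (conv R (NPadj A)) (conv R F) /\
     aff_equiv (conv R (Part A)) (conv R F)) /\
  le_a R (Part A) (NPadj A).
Proof.
move=> _ _ H3.
have hF : forall a b c : bool, a != b ->
    is_face (conv R (NPadj A)) (conv R (Fsub A a b c)) /\
    aff_equiv (conv R (Part A)) (conv R (Fsub A a b c)).
  move=> a b c ab; split; first exact: face.
  exact: equivF.
split.
  move=> [[a b] c]; rewrite !inE => /or4P[] /eqP [-> -> ->] /=; exact: hF.
have [_ [M [b0 [inj DI]]]] := hF false true true isT.
have [cc [d [v1 v2]]] := @face R m n A false true true.
exists M, b0; split => //.
exists cc, d; split => // z; rewrite -DI; exact: v2.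
Qed.
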